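(* Let $\mathcal{I}$ be a metric space, $d\ge1$, $\boldsymbol{S}\colon\mathcal{I}\to\mathbb{C}^{d\times d}$, $i\mapsto S_i$, continuous, and let $\varLambda\subset\varSigma_{\mathcal{I}}^+$ be a nonempty compact set invariant under the one-sided shift $\theta_+$. Put $\boldsymbol{S}^+_{\upharpoonright\varLambda}(0)=\{\mathrm{Id}_{\mathbb{C}^d}\}$, $\boldsymbol{S}^+_{\upharpoonright\varLambda}(\ell)=\{S_{i_\ell}\cdots S_{i_1}: i(\cdot)\in\varLambda\}$ for $\ell\ge1$, and $\boldsymbol{S}^+_{\upharpoonright\varLambda}=\bigcup_{\ell\ge0}\boldsymbol{S}^+_{\upharpoonright\varLambda}(\ell)$. Then $S_{i_n}\cdots S_{i_1}\to\mathbf{0}_{d\times d}$ as $n\to\infty$ for every $i(\cdot)\in\varLambda$ if and only if both (1) there is $\beta>0$ with $\|A\|_2\le\beta$ for all $A\in\boldsymbol{S}^+_{\upharpoonright\varLambda}$, and (2) there exist a constant $\gamma$ with $0<\gamma<1$ and an integer $N\ge1$ such that $\rho(A)\le\gamma$ for all $A\in\boldsymbol{S}^+_{\upharpoonright\varLambda}(\ell)$ and all $\ell\ge N$.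
   Context: $\varSigma_{\mathcal{I}}^+$ is the set of sequences $i(\cdot)=(i_n)_{n\ge1}$ in $\mathcal{I}$ with the product topology, $\theta_+$ the shift $(i_n)_{n\ge1}\mapsto(i_{n+1})_{n\ge1}$. $\|\cdot\|_2$ is the matrix norm induced by the Euclidean norm on $\mathbb{C}^d$, and $\rho(A)$ is the spectral radius. *)

(* Defs.v *)
From HB Require Import structures.
From mathcomp Require Import all_boot all_order all_algebra.
From mathcomp Require Import all_classical all_reals all_analysis.
From mathcomp Require Import complex.

Set Implicit Arguments.
Unset Strict Implicit.
Unset Printing Implicit Defensive.

Import Order.TTheory GRing.Theory Num.Theory.
Local Open Scope classical_set_scope.
Local Open Scope ring_scope.

Section Defs.
Variable R : realType.

Definition cabs (z : R[i]) : R := Num.sqrt (complex.Re z ^+ 2 + complex.Im z ^+ 2).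

Definition vnorm2 (d : nat) (v : 'cV[R[i]]_d) : R :=
  Num.sqrt (\sum_(j < d) cabs (v j ord0) ^+ 2).

Definition opnorm2 (d : nat) (A : 'M[R[i]]_d) : R :=
  sup [set vnorm2 (A *m v) | v in [set v : 'cV[R[i]]_d | vnorm2 v <= 1]].

Definition specrad (d : nat) (A : 'M[R[i]]_d) : R :=
  sup [set cabs l | l in [set l : R[i] | eigenvalue A l]].

(* one-sided shift on sequences (i_n)_{n>=1}, stored 0-indexed: i n = i_{n+1} *)
Definition theta_plus {I : Type} (i : nat -> I) : nat -> I := fun n => i n.+1.

Fixpoint prodS {I : Type} (d : nat) (S : I -> 'M[R[i]]_d) (i : nat -> I) (l : nat)
  : 'M[R[i]]_d :=
  match l with
  | 0 => 1%:M
  | l'.+1 => S (i l') *m prodS S i l'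
  end.

Definition Splus {I : Type} (d : nat) (S : I -> 'M[R[i]]_d) (Lam : set (nat -> I))
  (l : nat) : set 'M[R[i]]_d :=
  if l is 0 then [set 1%:M] else [set prodS S i l | i in Lam].

Definition Splus_all {I : Type} (d : nat) (S : I -> 'M[R[i]]_d) (Lam : set (nat -> I))
  : set 'M[R[i]]_d :=
  \bigcup_(l in [set: nat]) Splus S Lam l.

End Defs.

(* Main.v *)
Require Import Defs.
From HB Require Import structures.
From mathcomp Require Import all_boot all_order all_algebra all_fingroup.
From mathcomp Require Import all_classical all_reals all_analysis.
From mathcomp Require Import complex.
From mathcomp Require Import ring lra.
Import Order.TTheory GRing.Theory Num.Theory.
Import numFieldTopology.Exports.
Local Open Scope classical_set_scope.
Local Open Scope ring_scope.
Set Implicit Arguments.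
Unset Strict Implicit.
Unset Printing Implicit Defensive.
Section Basic.
Variable R : realType.
Local Notation C := (R[i]).

Lemma cabsE (z : C) : ((cabs z)%:C)%C = `|z|.
Proof. by rewrite normc_def. Qed.

Lemma cabs_ge0 (z : C) : 0 <= cabs z.
Proof. exact: sqrtr_ge0. Qed.

Lemma cabsD (a b : C) : cabs (a + b) <= cabs a + cabs b.
Proof.
rewrite -lecR rmorphD /= !cabsE; exact: ler_normD.
Qed.

Lemma cabs_inj (x y : R) : (x%:C)%C = (y%:C)%C -> x = y.
Proof. by case. Qed.

Lemma cabsM (a b : C) : cabs (a * b) = cabs a * cabs b.
Proof. by apply: cabs_inj; rewrite rmorphM /= !cabsE normrM. Qed.

Lemma cabsN (a : C) : cabs (- a) = cabs a.
Proof. by apply: cabs_inj; rewrite !cabsE normrN. Qed.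

Lemma cabs0 : cabs (0 : C) = 0.
Proof. by apply: cabs_inj; rewrite !cabsE normr0. Qed.

Lemma cabs1 : cabs (1 : C) = 1.
Proof. by apply: cabs_inj; rewrite !cabsE normr1. Qed.

Lemma cabsB (a b : C) : cabs a - cabs b <= cabs (a - b).
Proof.
rewrite lerBlDr; apply: le_trans (cabsD _ _); by rewrite subrK.
Qed.

Lemma cabs_sum (I : Type) (r : seq I) (P : pred I) (F : I -> C) :
  cabs (\sum_(x <- r | P x) F x) <= \sum_(x <- r | P x) cabs (F x).
Proof.
elim/big_rec2: _ => [|x y s _ Hy]; first by rewrite cabs0.
by apply: le_trans (cabsD _ _) _; rewrite lerD2l.
Qed.

Lemma cabs_prod (I : Type) (r : seq I) (P : pred I) (F : I -> C) :
  cabs (\prod_(x <- r | P x) F x) = \prod_(x <- r | P x) cabs (F x).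
Proof.
elim/big_rec2: _ => [|x y s _ IH]; first by rewrite cabs1.
by rewrite cabsM IH.
Qed.

Lemma cabs_expN1 (n : nat) : cabs ((-1 : C) ^+ n) = 1.
Proof. by apply: cabs_inj; rewrite !cabsE normrX normrN1 expr1n. Qed.

Lemma cabs_natr (n : nat) : cabs (n%:R : C) = n%:R.
Proof. by apply: cabs_inj; rewrite !cabsE normr_nat rmorph_nat. Qed.

End Basic.
Section B2.
Variable R : realType.
Local Notation C := (R[i]).
Lemma abs_Re_le (z : C) : `|complex.Re z| <= cabs z.
Proof.
rewrite /cabs.
have h : complex.Re z ^+ 2 <= complex.Re z ^+ 2 + complex.Im z ^+ 2.
  by rewrite lerDl sqr_ge0.
have := ler_sqrt (complex.Re z ^+ 2) (addr_ge0 (sqr_ge0 (complex.Re z)) (sqr_ge0 (complex.Im z))).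
rewrite h sqrtr_sqr; by [].
Qed.

Lemma abs_Im_le (z : C) : `|complex.Im z| <= cabs z.
Proof.
rewrite /cabs.
have h : complex.Im z ^+ 2 <= complex.Re z ^+ 2 + complex.Im z ^+ 2.
  by rewrite lerDr sqr_ge0.
have := ler_sqrt (complex.Im z ^+ 2) (addr_ge0 (sqr_ge0 (complex.Re z)) (sqr_ge0 (complex.Im z))).
rewrite h sqrtr_sqr; by [].
Qed.

Lemma cabs_le_ReIm (z : C) : cabs z <= `|complex.Re z| + `|complex.Im z|.
Proof.
rewrite /cabs.
set a := complex.Re z; set b := complex.Im z.
have h0 : 0 <= `|a| + `|b| by rewrite addr_ge0.
have h : a ^+ 2 + b ^+ 2 <= (`|a| + `|b|) ^+ 2.
  rewrite sqrrD -(real_normK (num_real a)) -(real_normK (num_real b)).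
  by rewrite -addrA lerD2l lerDr mulrn_wge0 // mulr_ge0.
have := ler_sqrt (a ^+ 2 + b ^+ 2) (sqr_ge0 (`|a| + `|b|)).
by rewrite h sqrtr_sqr ger0_norm.
Qed.
End B2.
Section Norms.
Variable R : realType.
Local Notation C := (R[i]).

Definition n1 {m n} (A : 'M[C]_(m, n)) : R := \sum_(j < m) \sum_(k < n) cabs (A j k).

Lemma n1_ge0 m n (A : 'M[C]_(m, n)) : 0 <= n1 A.
Proof. by apply: sumr_ge0 => j _; apply: sumr_ge0 => k _; exact: cabs_ge0. Qed.

Lemma entry_le_n1 m n (A : 'M[C]_(m, n)) j k : cabs (A j k) <= n1 A.
Proof.
rewrite /n1 (bigD1 j) //= (bigD1 k) //= -addrA lerDl.
apply: addr_ge0; first by apply: sumr_ge0 => *; exact: cabs_ge0.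
by apply: sumr_ge0 => *; apply: sumr_ge0 => *; exact: cabs_ge0.
Qed.

Lemma n1_mul m n p (A : 'M[C]_(m, n)) (B : 'M[C]_(n, p)) :
  n1 (A *m B) <= n1 A * n1 B.
Proof.
rewrite /n1 mulr_suml; apply: ler_sum => j _.
apply: (@le_trans _ _ (\sum_(k < p) \sum_(l < n) cabs (A j l) * cabs (B l k))).
  apply: ler_sum => k _; rewrite mxE; apply: le_trans (cabs_sum _ _ _) _.
  by apply: ler_sum => l _; rewrite cabsM.
rewrite exchange_big /= mulr_suml; apply: ler_sum => l _.
rewrite -mulr_sumr; apply: ler_wpM2l; first exact: cabs_ge0.
apply: (@le_trans _ _ (\sum_(k < p) cabs (B l k))); first by [].
rewrite (bigD1 l) //= lerDl.
by apply: sumr_ge0 => *; apply: sumr_ge0 => *; exact: cabs_ge0.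
Qed.

Lemma n1_scale m n (c : C) (A : 'M[C]_(m, n)) : n1 (c *: A) = cabs c * n1 A.
Proof.
rewrite /n1 mulr_sumr; apply: eq_bigr => j _; rewrite mulr_sumr.
by apply: eq_bigr => k _; rewrite mxE cabsM.
Qed.

Lemma n1_bound m n (A : 'M[C]_(m, n)) (K : R) :
  (forall j k, cabs (A j k) <= K) -> n1 A <= (m * n)%:R * K.
Proof.
move=> HK; rewrite /n1.
apply: (@le_trans _ _ (\sum_(j < m) \sum_(k < n) K)).
  by apply: ler_sum => j _; apply: ler_sum => k _; exact: HK.
by rewrite !sumr_const !card_ord -mulrnA mulr_natl [(n * m)%N]mulnC.
Qed.

Lemma n1_add m n (A B : 'M[C]_(m, n)) : n1 (A + B) <= n1 A + n1 B.
Proof.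
rewrite /n1 -big_split /=; apply: ler_sum => j _; rewrite -big_split /=.
by apply: ler_sum => k _; rewrite mxE; exact: cabsD.
Qed.

Lemma n1_opp m n (A : 'M[C]_(m, n)) : n1 (- A) = n1 A.
Proof.
by apply: eq_bigr => j _; apply: eq_bigr => k _; rewrite mxE cabsN.
Qed.

Lemma sumsq_le (I : finType) (F : I -> R) : (forall i, 0 <= F i) ->
  \sum_i F i ^+ 2 <= (\sum_i F i) ^+ 2.
Proof.
move=> F0.
suff : (0 <= \sum_i F i) /\ (\sum_i F i ^+ 2 <= (\sum_i F i) ^+ 2) by case.
apply: (big_ind2 (fun s t => 0 <= t /\ s <= t ^+ 2)).
- by rewrite expr0n /=.
- move=> x1 x2 y1 y2 [h1 h2] [h3 h4]; split; first exact: addr_ge0.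
  apply: (@le_trans _ _ (x2 ^+ 2 + y2 ^+ 2)); first exact: lerD.
  by rewrite sqrrD -addrA lerD2l lerDr mulrn_wge0 // mulr_ge0.
- by move=> i _; split.
Qed.

Lemma vnorm2_le_n1 d (v : 'cV[C]_d) : vnorm2 v <= n1 v.
Proof.
rewrite /vnorm2 /n1.
have e : \sum_(j < d) \sum_(k < 1) cabs (v j k) = \sum_(j < d) cabs (v j ord0).
  by apply: eq_bigr => j _; rewrite big_ord1.
rewrite e.
have h0 : 0 <= \sum_(j < d) cabs (v j ord0) by apply: sumr_ge0 => *; exact: cabs_ge0.
have := ler_sqrt (\sum_(j < d) cabs (v j ord0) ^+ 2) (sqr_ge0 (\sum_(j < d) cabs (v j ord0))).
rewrite sumsq_le; last by move=> ?; exact: cabs_ge0.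
by rewrite sqrtr_sqr ger0_norm.
Qed.

Lemma entry_le_vnorm2 d (v : 'cV[C]_d) j : cabs (v j ord0) <= vnorm2 v.
Proof.
rewrite /vnorm2.
have h : cabs (v j ord0) ^+ 2 <= \sum_(l < d) cabs (v l ord0) ^+ 2.
  rewrite (bigD1 j) //= lerDl.
  by apply: sumr_ge0 => *; exact: sqr_ge0.
have := ler_sqrt (cabs (v j ord0) ^+ 2) (le_trans (sqr_ge0 _) h).
by rewrite h sqrtr_sqr ger0_norm //; exact: cabs_ge0.
Qed.

Lemma vnorm2_ge0 d (v : 'cV[C]_d) : 0 <= vnorm2 v.
Proof. exact: sqrtr_ge0. Qed.

Lemma vnorm2_mul d (A : 'M[C]_d) (v : 'cV[C]_d) :
  vnorm2 (A *m v) <= n1 A * vnorm2 v.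
Proof.
apply: le_trans (vnorm2_le_n1 _) _.
rewrite /n1 mulr_suml; apply: ler_sum => j _; rewrite big_ord1 mxE.
apply: le_trans (cabs_sum _ _ _) _; rewrite mulr_suml; apply: ler_sum => k _.
by rewrite cabsM; apply: ler_wpM2l; [exact: cabs_ge0 | exact: entry_le_vnorm2].
Qed.

Lemma opnorm2_le_n1 d (A : 'M[C]_d) : opnorm2 A <= n1 A.
Proof.
apply: ge_sup.
  exists (vnorm2 (A *m 0)); exists 0 => //=.
  rewrite /vnorm2 (eq_bigr (fun _ => 0)) ?big1 ?sqrtr0 // => j _.
  by rewrite mxE cabs0 expr0n.
move=> y [v /= hv <-]; apply: le_trans (vnorm2_mul _ _) _.
by rewrite -[leRHS]mulr1 ler_wpM2l // n1_ge0.
Qed.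

Lemma entry_le_opnorm2 d (A : 'M[C]_d) j k : cabs (A j k) <= opnorm2 A.
Proof.
have hub : has_ubound [set vnorm2 (A *m v) | v in [set v : 'cV[C]_d | vnorm2 v <= 1]].
  exists (n1 A) => y [v /= hv <-]; apply: le_trans (vnorm2_mul _ _) _.
  by rewrite -[leRHS]mulr1 ler_wpM2l // n1_ge0.
apply: (@le_trans _ _ (vnorm2 (A *m delta_mx k ord0))).
  by rewrite -colE; have := entry_le_vnorm2 (col k A) j; rewrite mxE.
apply: ub_le_sup => //; exists (delta_mx k ord0) => //=.
rewrite /vnorm2 (bigD1 k) //= big1 ?addr0; last first.
  by move=> l /negbTE hl; rewrite mxE hl /= cabs0 expr0n.
by rewrite mxE !eqxx /= cabs1 expr1n sqrtr1.
Qed.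

End Norms.
Section Eigen.
Variable R : realType.
Local Notation C := (R[i]).

Lemma cabs_eq0 (z : C) : cabs z = 0 -> z = 0.
Proof. by move=> h; apply/eqP; rewrite -normr_eq0 -cabsE h. Qed.

Lemma n1_eq0 m n (A : 'M[C]_(m, n)) : n1 A = 0 -> A = 0.
Proof.
move=> /eqP; rewrite psumr_eq0; last first.
  by move=> j _; apply: sumr_ge0 => *; exact: cabs_ge0.
move=> /allP h; apply/matrixP => j k; rewrite mxE.
have := h j (mem_index_enum j); rewrite /= psumr_eq0; last first.
  by move=> *; exact: cabs_ge0.
by move=> /allP /(_ k (mem_index_enum k)) /= /eqP /cabs_eq0.
Qed.

Lemma eig_le_n1 d (A : 'M[C]_d) l : eigenvalue A l -> cabs l <= n1 A.
Proof.
case/eigenvalueP => v hv vn0.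
have hpos : 0 < n1 v.
  rewrite lt_def n1_ge0 andbT; apply/eqP => /n1_eq0 h.
  by move: vn0; rewrite h eqxx.
have := n1_mul v A; rewrite hv n1_scale mulrC.
by rewrite ler_pM2l.
Qed.

Lemma eig_le_specrad d (A : 'M[C]_d) l : eigenvalue A l -> cabs l <= specrad A.
Proof.
move=> hl; apply: ub_le_sup; last by exists l.
exists (n1 A) => y [l' /= hl' <-]; exact: eig_le_n1.
Qed.

Lemma specrad_le d (A : 'M[C]_d) g : 0 <= g ->
  (forall l, eigenvalue A l -> cabs l <= g) -> specrad A <= g.
Proof.
move=> g0 h; rewrite /specrad.
have [->|ne] := eqVneq [set cabs l | l in [set l : C | eigenvalue A l]] set0.
  by rewrite sup0.
apply: ge_sup; first exact/set0P.
by move=> y [l /= hl <-]; exact: h.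
Qed.

Lemma det_bound n (A : 'M[C]_n) (K : R) : 0 <= K ->
  (forall i j, cabs (A i j) <= K) -> cabs (\det A) <= n`!%:R * K ^+ n.
Proof.
move=> K0 hK; rewrite /determinant.
apply: le_trans (cabs_sum _ _ _) _.
apply: (@le_trans _ _ (\sum_(s : 'S_n) K ^+ n)).
  apply: ler_sum => s _; rewrite cabsM cabs_expN1 mul1r cabs_prod.
  have -> : K ^+ n = \prod_(i < n) K by rewrite prodr_const card_ord.
  apply: ler_prod => i _.
  by rewrite cabs_ge0 hK.
by rewrite sumr_const card_Sn mulr_natl.
Qed.

Lemma adj_bound n (A : 'M[C]_n) (K : R) : 0 <= K ->
  (forall i j, cabs (A i j) <= K) ->
  forall i j, cabs (\adj A i j) <= (n.-1)`!%:R * K ^+ n.-1.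
Proof.
move=> K0 hK i j; rewrite mxE /cofactor cabsM cabs_expN1 mul1r.
by apply: det_bound => // a b; rewrite !mxE.
Qed.

Lemma det_scale_vec n (M : 'M[C]_n) (y : 'cV[C]_n) :
  (\det M) *: y = \adj M *m (M *m y).
Proof. by rewrite mulmxA mul_adj_mx mul_scalar_mx. Qed.

Lemma char_horner n (A : 'M[C]_n) (a : C) : (char_poly A).[a] = \det (a%:M - A).
Proof.
rewrite /char_poly /determinant horner_sum; apply: eq_bigr => s _.
rewrite hornerM horner_exp !hornerE; congr (_ * _).
rewrite (big_morph _ (fun p q => hornerM p q a) (hornerC 1 a)).
by apply: eq_bigr => i _; rewrite !mxE !(hornerE, hornerMn).
Qed.

Lemma prod_const_seq (T : Type) (r : seq T) (c : R) : \prod_(z <- r) c = c ^+ size r.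
Proof. by elim: r => [|z r IH]; rewrite ?big_nil ?big_cons ?IH ?exprS. Qed.

Lemma det_lower n (A : 'M[C]_n) (g : R) : g < 1 ->
  (forall l, eigenvalue A l -> cabs l <= g) ->
  (1 - g) ^+ n <= cabs (\det (1%:M - A)).
Proof.
move=> g1 hg.
have [r hr] := closed_field_poly_normal (char_poly A).
have hlead : lead_coef (char_poly A) = 1 := monicP (char_poly_monic A).
rewrite hlead scale1r in hr.
have hsz : size r = n.
  by have := size_char_poly A; rewrite hr size_prod_XsubC => -[].
rewrite -char_horner hr horner_prod cabs_prod -{1}hsz -prod_const_seq.
rewrite big_seq_cond [X in _ <= X]big_seq_cond.
apply: ler_prod => z /andP[zr _]; rewrite subr_ge0 (ltW g1) /=.
rewrite hornerXsubC; apply: le_trans (cabsB _ _); rewrite cabs1 lerD2l lerN2.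
apply: hg; rewrite eigenvalue_root_char hr root_prod_XsubC //.
Qed.

End Eigen.
Section Prod.
Variables (R : realType) (I : Type) (d : nat) (S : I -> 'M[R[i]]_d).
Variable (Lam : set (nat -> I)).

Lemma iter_theta (i : nat -> I) m n : iter m theta_plus i n = i (n + m)%N.
Proof.
elim: m n => [|m IH] n; first by rewrite addn0.
by rewrite iterS /theta_plus IH addSnnS.
Qed.

Lemma Lam_iter (hL : forall i, Lam i -> Lam (theta_plus i)) i m :
  Lam i -> Lam (iter m theta_plus i).
Proof. by move=> Li; elim: m => [|m IH] //=; exact: hL. Qed.

Lemma prodS_add (i : nat -> I) m n :
  prodS S i (m + n) = prodS S (iter m theta_plus i) n *m prodS S i m.
Proof.
elim: n => [|n IH]; first by rewrite addn0 /= mul1mx.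
by rewrite addnS /= IH mulmxA iter_theta addnC.
Qed.

Lemma Splus_prodS i l : Lam i -> (0 < l)%N -> Splus S Lam l (prodS S i l).
Proof. by case: l => // l Li _; exists i. Qed.

Lemma Splus_all_prodS i l : Lam i -> Splus_all S Lam (prodS S i l).
Proof.
move=> Li; exists l => //; case: l => [|l] //=; by exists i.
Qed.

End Prod.
Section Conv.
Variables (R : realType) (I : Type) (d : nat) (S : I -> 'M[R[i]]_d).
Variable (Lam : set (nat -> I)).
Hypothesis d1 : (1 <= d)%N.
Hypothesis hL : forall i, Lam i -> Lam (theta_plus i).

Lemma trunc_close (u v : R) : 0 <= u -> 0 <= v ->
  Num.truncn u = Num.truncn v -> `|u - v| < 1.
Proof.
move=> u0 v0 e.
have h1 := truncnS_gt u; have h2 := truncnS_gt v.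
have h3 : (Num.truncn u)%:R <= u by rewrite truncn_le.
have h4 : (Num.truncn v)%:R <= v by rewrite truncn_le.
rewrite e -natr1 in h1 h3; rewrite -natr1 in h2.
rewrite ltr_norml; apply/andP; split; lra.
Qed.

Lemma conv_dir (beta gamma : R) (N : nat) :
  0 < beta -> (forall A, Splus_all S Lam A -> opnorm2 A <= beta) ->
  gamma < 1 -> (1 <= N)%N ->
  (forall l, (N <= l)%N -> forall A, Splus S Lam l A -> specrad A <= gamma) ->
  forall i, Lam i -> forall j k : 'I_d,
    (fun n => cabs (prodS S i n j k)) @ \oo --> (0 : R).
Proof.
move=> b0 hb g1 N1 hg i Li j k.
have Hent : forall i' l a b, Lam i' -> cabs (prodS S i' l a b) <= beta.
  move=> i' l a b Li'; apply: le_trans (entry_le_opnorm2 _ a b) _.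
  exact/hb/Splus_all_prodS.
apply/cvgr0Pnorm_lt => eps eps0.
case: (pselect (exists n0, forall n, (n0 <= n)%N -> cabs (prodS S i n j k) < eps)).
  move=> [n0 h]; apply: filterS (nbhs_infty_ge n0) => n hn.
  by rewrite ger0_norm ?cabs_ge0 //; exact: h.
move=> hno; exfalso.
have hfreq : forall m, exists n, (m < n)%N /\ eps <= cabs (prodS S i n j k).
  move=> m; apply: contrapT => H; apply: hno; exists m.+1 => n hn.
  rewrite ltNge; apply/negP => hle; apply: H; by exists n.
pose y m := col k (prodS S i m).
pose W m l := prodS S (iter m theta_plus i) l.
have hWy : forall m l, y (m + l)%N = W m l *m y m.
  by move=> m l; rewrite /y /W prodS_add !colE mulmxA.
have LW : forall m, Lam (iter m theta_plus i) by move=> m; exact: Lam_iter.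
have hWn1 : forall m l, n1 (W m l) <= (d * d)%:R * beta.
  by move=> m l; apply: n1_bound => a b; exact: Hent.
have dd0 : (0 : R) < (d * d)%:R by rewrite ltr0n muln_gt0 d1.
have ddb0 : (0 : R) < (d * d)%:R * beta by apply: mulr_gt0.
pose c := eps / ((d * d)%:R * beta).
have c0 : 0 < c by rewrite /c divr_gt0.
have hy : forall m, c <= n1 (y m).
  move=> m; have [n [mn hn]] := hfreq m.
  have e : n = (m + (n - m))%N by rewrite subnKC // ltnW.
  rewrite /c ler_pdivrMr //.
  apply: le_trans hn _.
  have -> : cabs (prodS S i n j k) = cabs (y n j ord0) by rewrite /y mxE.
  apply: le_trans (entry_le_n1 _ _ _) _.
  rewrite e hWy; apply: le_trans (n1_mul _ _) _.
  rewrite [X in X <= _]mulrC; apply: ler_wpM2l; [exact: n1_ge0 | exact: hWn1].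
pose K := 1 + beta.
have K0 : 0 < K by rewrite /K addr_gt0 // ltr01.
pose Kc := (d.-1)`!%:R * K ^+ d.-1.
have Kc0 : 0 < Kc by rewrite /Kc mulr_gt0 ?ltr0n ?fact_gt0 // exprn_gt0.
pose Z := (d * d)%:R * Kc * (d * 1)%:R.
have Z0 : 0 < Z by rewrite /Z !mulr_gt0 // ?exprn_gt0 // ltr0n muln1.
pose P := (1 - gamma) ^+ d * c.
have P0 : 0 < P by rewrite /P mulr_gt0 // exprn_gt0 // subr_gt0.
pose del := P / (4 * Z).
have del0 : 0 < del by rewrite /del divr_gt0 // mulr_gt0.
have hZ : Z * (2 * del) < P.
  have Zn0 : Z != 0 by rewrite gt_eqF.
  have -> : Z * (2 * del) = P / 2 by rewrite /del; field.
  lra.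
pose L := Num.truncn (2 * beta / del).
pose coord (v : 'cV[R[i]]_d) (p : 'I_d * bool) : R :=
  if p.2 then complex.Re (v p.1 ord0) else complex.Im (v p.1 ord0).
pose cell (v : 'cV[R[i]]_d) : {ffun 'I_d * bool -> 'I_L.+1} :=
  [ffun p => inord (Num.truncn ((coord v p + beta) / del))].
have hcoord : forall m p, `|coord (y m) p| <= beta.
  move=> m [a b]; rewrite /coord /=; case: b.
  - by apply: le_trans (abs_Re_le _) _; rewrite /y mxE; exact: Hent.
  - by apply: le_trans (abs_Im_le _) _; rewrite /y mxE; exact: Hent.
have hclose : forall m1 m2, cell (y m1) = cell (y m2) ->
    forall a, cabs (y m1 a ord0 - y m2 a ord0) <= 2 * del.
  move=> m1 m2 e a.
  have hp : forall p, `|coord (y m1) p - coord (y m2) p| < del.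
    move=> p; have e' : cell (y m1) p = cell (y m2) p by rewrite e.
    have := congr1 val e'; rewrite /cell !ffunE /=.
    have hbd : forall m, (Num.truncn ((coord (y m) p + beta) / del) < L.+1)%N.
      move=> m; rewrite ltnS; apply: le_truncn; rewrite ler_pM2r ?invr_gt0 //.
      have := hcoord m p; rewrite ler_norml => /andP[_ h]; lra.
    have hnn : forall m, 0 <= (coord (y m) p + beta) / del.
      move=> m; rewrite divr_ge0 ?(ltW del0) //.
      have := hcoord m p; rewrite ler_norml => /andP[h _]; lra.
    rewrite !inordK // => et.
    have := trunc_close (hnn m1) (hnn m2) et.
    rewrite -mulrBl normrM (@gtr0_norm _ del^-1) ?invr_gt0 //.
    rewrite ltr_pdivrMr // mul1r.
    have -> : coord (y m1) p + beta - (coord (y m2) p + beta) =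
              coord (y m1) p - coord (y m2) p by rewrite opprD addrACA subrr addr0.
    by [].
  apply: le_trans (cabs_le_ReIm _) _.
  have h1 := hp (a, true); have h2 := hp (a, false); rewrite /coord /= in h1 h2.
  move: h1 h2; case: (y m1 a ord0) => x1 w1; case: (y m2 a ord0) => x2 w2 /= h1 h2.
  have := lerD (ltW h1) (ltW h2); lra.
pose f (t : 'I_(#|{ffun 'I_d * bool -> 'I_L.+1}|).+1) := cell (y (t * N)%N).
have [t1 [t2 [tne tf]]] : exists t1 t2, t1 <> t2 /\ f t1 = f t2.
  apply: contrapT => H.
  have finj : injective f.
    move=> t1 t2 e; apply: contrapT => ne; apply: H; by exists t1, t2.
  by have := @leq_card _ _ f finj; rewrite card_ord ltnn.
wlog lt12 : t1 t2 tne tf / (t1 < t2)%N.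
  move=> Hw; case: (ltngtP t1 t2) => [lt|gt|eq].
  - exact: (Hw t1 t2).
  - by apply: (Hw t2 t1) => // e; apply: tne.
  - by apply: tne; apply: val_inj.
set m1 := (t1 * N)%N; set m2 := (t2 * N)%N.
have lm : (m1 <= m2)%N by rewrite /m1 /m2 leq_mul2r ltnW ?orbT.
have hl : (N <= m2 - m1)%N.
  by rewrite /m1 /m2 -mulnBl leq_pmull // subn_gt0.
have e12 : m2 = (m1 + (m2 - m1))%N by rewrite subnKC.
set l := (m2 - m1)%N.
pose Wm := W m1 l.
have hy2 : y m2 = Wm *m y m1 by rewrite {1}e12 hWy.
have heig : forall z, eigenvalue Wm z -> cabs z <= gamma.
  move=> z hz; apply: le_trans (eig_le_specrad hz) _; apply: (hg l hl).
  by apply: Splus_prodS => //; apply: leq_trans N1 hl.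
have hdet := det_lower g1 heig.
pose M := 1%:M - Wm.
have hMent : forall a b, cabs (M a b) <= K.
  move=> a b; rewrite /M !mxE; apply: le_trans (cabsD _ _) _; rewrite cabsN.
  apply: lerD; last exact: Hent.
  by case: (a == b); rewrite /= ?cabs1 ?cabs0 ?ler01.
have hMy : M *m y m1 = y m1 - y m2 by rewrite /M mulmxBl mul1mx hy2.
have hadj : n1 (\adj M) <= (d * d)%:R * Kc.
  by apply: n1_bound; apply: adj_bound => //; exact: ltW.
have hdiff : n1 (y m1 - y m2) <= (d * 1)%:R * (2 * del).
  apply: n1_bound => a b; rewrite (ord1 b).
  by have := hclose m1 m2 tf a; rewrite !mxE.
have key : P <= Z * (2 * del).
  apply: (@le_trans _ _ (cabs (\det M) * n1 (y m1))).
    rewrite /P; apply: ler_pM; [by rewrite exprn_ge0 // subr_ge0 ltW | exact: ltW | exact: hdet | exact: hy].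
  rewrite -n1_scale det_scale_vec hMy.
  apply: le_trans (n1_mul _ _) _.
  rewrite /Z -mulrA; apply: ler_pM; [exact: n1_ge0 | exact: n1_ge0 | exact: hadj | exact: hdiff].
by move: hZ; rewrite ltNge key.
Qed.

End Conv.
Section Cont.
Variables (R : realType) (I : metricType R) (d : nat) (S : I -> 'M[R[i]]_d).
Hypothesis hS : forall j k : 'I_d, continuous (fun x : I => complex.Re (S x j k)) /\
                      continuous (fun x : I => complex.Im (S x j k)).
Local Notation X := {ptws nat -> I}.

Lemma ReD (a b : R[i]) : complex.Re (a + b) = complex.Re a + complex.Re b.
Proof. by case: a; case: b. Qed.
Lemma ImD (a b : R[i]) : complex.Im (a + b) = complex.Im a + complex.Im b.
Proof. by case: a; case: b. Qed.
Lemma ReM (a b : R[i]) : complex.Re (a * b) = complex.Re a * complex.Re b - complex.Im a * complex.Im b.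
Proof. by case: a; case: b. Qed.
Lemma ImM (a b : R[i]) : complex.Im (a * b) = complex.Re a * complex.Im b + complex.Im a * complex.Re b.
Proof. by case: a => ? ?; case: b => ? ? /=; rewrite addrC. Qed.

Lemma cts_add (f g : X -> R) : continuous f -> continuous g ->
  continuous (fun x => f x + g x).
Proof. by move=> hf hg x; exact: (continuousD (hf x) (hg x)). Qed.

Lemma cts_mul (f g : X -> R) : continuous f -> continuous g ->
  continuous (fun x => f x * g x).
Proof. by move=> hf hg x; exact: (continuousM (hf x) (hg x)). Qed.

Lemma cts_opp (f : X -> R) : continuous f -> continuous (fun x => - f x).
Proof. by move=> hf x; exact: (continuousN (hf x)). Qed.

Lemma cts_cst (c : R) : continuous (fun _ : X => c).
Proof. exact: cst_continuous. Qed.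

Lemma cts_sum (J : Type) (r : seq J) (P : pred J) (F : J -> X -> R) :
  (forall j, continuous (F j)) ->
  continuous (fun x => \sum_(j <- r | P j) F j x).
Proof.
move=> hF; elim: r => [|a r IH].
  have -> : (fun x : X => \sum_(j <- [::] | P j) F j x) = (fun _ => 0).
    by apply: funext => x; rewrite big_nil.
  exact: cts_cst.
have -> : (fun x : X => \sum_(j <- a :: r | P j) F j x) =
          (fun x => (if P a then F a x else 0) + \sum_(j <- r | P j) F j x).
  by apply: funext => x; rewrite big_cons; case: (P a) => //; rewrite add0r.
apply: cts_add => //; case: (P a) => //; exact: cts_cst.
Qed.

Lemma cts_proj (n : nat) : continuous (fun x : X => x n).
Proof. exact: (@proj_continuous nat (fun _ => I) n). Qed.

Lemma cts_S_Re n a b : continuous (fun x : X => complex.Re (S (x n) a b)).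
Proof.
move=> x; apply: (@continuous_comp X I R (fun x : X => x n) (fun z => complex.Re (S z a b))).
  exact: cts_proj.
exact: (hS a b).1.
Qed.

Lemma cts_S_Im n a b : continuous (fun x : X => complex.Im (S (x n) a b)).
Proof.
move=> x; apply: (@continuous_comp X I R (fun x : X => x n) (fun z => complex.Im (S z a b))).
  exact: cts_proj.
exact: (hS a b).2.
Qed.

Lemma cts_prodS n a b :
  continuous (fun x : X => complex.Re (prodS S x n a b)) /\
  continuous (fun x : X => complex.Im (prodS S x n a b)).
Proof.
elim: n a b => [|n IH] a b.
  by split; rewrite /=; apply: cts_cst.
have e : forall x : X, prodS S x n.+1 a b = \sum_(l < d) S (x n) a l * prodS S x n l b.
  by move=> x; rewrite /= mxE.
split.
- have -> : (fun x : X => complex.Re (prodS S x n.+1 a b)) =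
    (fun x => \sum_(l < d) (complex.Re (S (x n) a l) * complex.Re (prodS S x n l b)
       + - (complex.Im (S (x n) a l) * complex.Im (prodS S x n l b)))).
    apply: funext => x; rewrite e.
    elim/big_rec2: _ => [|l s t _ <-] //; by rewrite ReD ReM.
  apply: cts_sum => l; apply: cts_add; last apply: cts_opp;
    apply: cts_mul; by [exact: cts_S_Re | exact: cts_S_Im | exact: (IH l b).1 | exact: (IH l b).2].
- have -> : (fun x : X => complex.Im (prodS S x n.+1 a b)) =
    (fun x => \sum_(l < d) (complex.Re (S (x n) a l) * complex.Im (prodS S x n l b)
       + complex.Im (S (x n) a l) * complex.Re (prodS S x n l b))).
    apply: funext => x; rewrite e.
    elim/big_rec2: _ => [|l s t _ <-] //; by rewrite ImD ImM.
  apply: cts_sum => l; apply: cts_add;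
    apply: cts_mul; by [exact: cts_S_Re | exact: cts_S_Im | exact: (IH l b).1 | exact: (IH l b).2].
Qed.

Lemma cts_g n : continuous (fun x : X => n1 (prodS S x n)).
Proof.
rewrite /n1; apply: cts_sum => a; apply: cts_sum => b.
move=> x; apply: (@continuous_comp X R R
   (fun x : X => complex.Re (prodS S x n a b) ^+ 2 + complex.Im (prodS S x n a b) ^+ 2)
   (@Num.sqrt R)); last exact: sqrt_continuous.
have [h1 h2] := cts_prodS n a b.
by apply: cts_add; rewrite /GRing.exp /=; apply: cts_mul.
Qed.

End Cont.
Section Fwd.
Variables (R : realType) (I : metricType R) (d : nat) (S : I -> 'M[R[i]]_d).
Variable (Lam : set (nat -> I)).
Hypothesis d1 : (1 <= d)%N.
Hypothesis hS : forall j k : 'I_d, continuous (fun x : I => complex.Re (S x j k)) /\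
                      continuous (fun x : I => complex.Im (S x j k)).
Hypothesis hne : Lam !=set0.
Hypothesis hcpt : @compact {ptws nat -> I} Lam.
Hypothesis hL : forall i, Lam i -> Lam (theta_plus i).
Hypothesis hconv : forall i, Lam i -> forall j k : 'I_d,
  (fun n => cabs (prodS S i n j k)) @ \oo --> (0 : R).
Local Notation X := {ptws nat -> I}.

Lemma near_nat (Q : nat -> Prop) : (\forall n \near \oo, Q n) ->
  exists N, forall n, (N <= n)%N -> Q n.
Proof. by case => N _ hN; exists N => n hn; apply: hN. Qed.

Lemma dd_gt0 : (0 : R) < (d * d)%:R.
Proof. by rewrite ltr0n muln_gt0 d1. Qed.

Lemma fwd_small x : Lam x -> exists n, (1 <= n)%N /\ n1 (prodS S x n) < 1/2.
Proof.
move=> Lx.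
pose del : R := (4 * (d * d)%:R)^-1.
have del0 : 0 < del by rewrite /del invr_gt0 mulr_gt0 // dd_gt0.
have h : \forall n \near \oo, forall p : 'I_d * 'I_d,
    cabs (prodS S x n p.1 p.2) < del.
  apply: filter_forall => p.
  have := hconv Lx p.1 p.2; move/cvgr0Pnorm_lt => /(_ del del0).
  by apply: filterS => n; rewrite ger0_norm // cabs_ge0.
have [N hN] := near_nat h.
exists N.+1; split => //.
apply: (@le_lt_trans _ _ ((d * d)%:R * del)).
  by apply: n1_bound => a b; apply: ltW; exact: (hN N.+1 (leqnSn N) (a, b)).
have dd0 : (d * d)%:R != 0 :> R by rewrite gt_eqF // dd_gt0.
rewrite /del invfM mulrCA divff // mulr1.
lra.
Qed.

Lemma fwd_cover : exists M, (1 <= M)%N /\ forall x, Lam x ->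
  exists n, [/\ (1 <= n)%N, (n <= M)%N & n1 (prodS S x n) < 1/2].
Proof.
have := (@compact_near_coveringP X Lam).1 hcpt nat \oo
  (fun M x => exists n, [/\ (1 <= n)%N, (n <= M)%N & n1 (prodS S x n) < 1/2]) _.
have hloc : forall x : X, Lam x -> \forall x' \near x & M \near \oo,
    exists n, [/\ (1 <= n)%N, (n <= M)%N & n1 (prodS S x' n) < 1/2].
  move=> x Lx; have [n0 [n01 hn0]] := fwd_small Lx.
  exists ([set x' : X | n1 (prodS S x' n0) < 1/2], [set M | (n0 <= M)%N]).
    split; last exact: nbhs_infty_ge.
    exact: (@cvgr_lt R X (nbhs x) _ (fun x' : X => n1 (prodS S x' n0)) _ (@cts_g _ _ _ _ hS n0 x) _ hn0).
  by move=> [x' M] [/= h1 h2]; exists n0.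
move=> /(_ _ hloc) /near_nat [N hN].
exists (maxn N 1); split; first by rewrite leq_max leqnn orbT.
by move=> x Lx; apply: (hN (maxn N 1)) => //; rewrite leq_max leqnn.
Qed.

Lemma fwd_bound1 : exists B, 1 <= B /\ forall x, Lam x -> n1 (prodS S x 1) <= B.
Proof.
have := (@compact_near_coveringP X Lam).1 hcpt nat \oo
  (fun M x => n1 (prodS S x 1) < M%:R) _.
have hloc : forall x : X, Lam x -> \forall x' \near x & M \near \oo,
    n1 (prodS S x' 1) < M%:R.
  move=> x Lx; set v := n1 (prodS S x 1).
  exists ([set x' : X | n1 (prodS S x' 1) < v + 1],
          [set M | ((Num.truncn (v + 1)).+1 <= M)%N]).
    split; last exact: nbhs_infty_ge.
    have hv : v < v + 1 by rewrite ltrDl ltr01.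
    exact: (@cvgr_lt R X (nbhs x) _ (fun x' : X => n1 (prodS S x' 1)) _ (@cts_g _ _ _ _ hS 1 x) _ hv).
  move=> [x' M] [/= h1 h2]; apply: (lt_trans h1).
  apply: (lt_le_trans (truncnS_gt _)); by rewrite ler_nat.
move=> /(_ _ hloc) /near_nat [N hN].
exists (Num.max 1 N%:R); split; first by rewrite le_max lexx.
move=> x Lx; apply: (le_trans (ltW (hN N (leqnn N) x Lx))).
by rewrite le_max lexx orbT.
Qed.


Lemma n1_one : n1 (1%:M : 'M[R[i]]_d) <= (d * d)%:R.
Proof.
rewrite -[X in _ <= X]mulr1; apply: n1_bound => a b; rewrite mxE.
by case: (a == b); rewrite /= ?cabs1 ?cabs0 ?ler01.
Qed.

Lemma fwd_pow B : (forall x, Lam x -> n1 (prodS S x 1) <= B) -> 1 <= B ->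
  forall k x, Lam x -> n1 (prodS S x k) <= (d * d)%:R * B ^+ k.
Proof.
move=> hB B1; elim=> [|k IH] x Lx.
  by rewrite expr0 mulr1; exact: n1_one.
rewrite /=; apply: le_trans (n1_mul _ _) _.
have hS1 : n1 (S (x k)) <= B.
  by have := hB _ (Lam_iter hL k Lx); rewrite /= mulmx1 iter_theta add0n.
rewrite exprS mulrCA; apply: ler_pM; [exact: n1_ge0 | exact: n1_ge0 | exact: hS1 | exact: IH].
Qed.

Lemma fwd_decay M B : (1 <= M)%N -> 1 <= B ->
  (forall x, Lam x -> exists n, [/\ (1 <= n)%N, (n <= M)%N & n1 (prodS S x n) < 1/2]) ->
  (forall k x, Lam x -> n1 (prodS S x k) <= (d * d)%:R * B ^+ k) ->
  forall n x, Lam x -> n1 (prodS S x n) <= (2 * ((d * d)%:R * B ^+ M)) * (2^-1) ^+ (n %/ M).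
Proof.
move=> M1 B1 hcov hpow n; elim/ltn_ind: n => n IH x Lx.
have B0 : 0 <= B by apply: le_trans B1; exact: ler01.
have C0 : 0 <= (d * d)%:R * B ^+ M by rewrite mulr_ge0 ?exprn_ge0 // ltW // dd_gt0.
have h20 : (0 : R) <= 2^-1 by rewrite invr_ge0.
have h21 : (2^-1 : R) <= 1 by rewrite invf_le1 // ler1n.
case: (leqP n M) => hnM.
  apply: le_trans (hpow n x Lx) _.
  apply: (@le_trans _ _ ((d * d)%:R * B ^+ M)).
    by apply: ler_wpM2l; [exact: (ltW dd_gt0) | exact: (ler_weXn2l B1 hnM)].
  have hq : (n %/ M <= 1)%N.
    by apply: (@leq_trans (M %/ M)%N); [exact: leq_div2r | rewrite divnn M1].
  move: hq; case: (n %/ M)%N => [|[|q]] // _.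
    by rewrite expr0 mulr1 ler_peMl // ler1n.
  by rewrite expr1 mulrAC divff ?mul1r // pnatr_eq0.
have [m [hm1 hm2 hm3]] := hcov x Lx.
have e : n = (m + (n - m))%N by rewrite subnKC // (leq_trans hm2 (ltnW hnM)).
rewrite {1}e prodS_add; apply: le_trans (n1_mul _ _) _.
have hlt : (n - m < n)%N by rewrite ltn_subrL hm1 (leq_trans hm1 (leq_trans hm2 (ltnW hnM))).
have IH' := IH (n - m)%N hlt (iter m theta_plus x) (Lam_iter hL m Lx).
apply: (@le_trans _ _ ((2 * ((d * d)%:R * B ^+ M)) * (2^-1) ^+ ((n - m) %/ M) * 2^-1)).
  apply: ler_pM; [exact: n1_ge0 | exact: n1_ge0 | exact: IH' | by rewrite -div1r; exact: ltW].
rewrite -mulrA -exprSr; apply: ler_wpM2l; first by rewrite mulr_ge0.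
apply: ler_wiXn2l => //.
have : (n <= (n - m) + 1 * M)%N by rewrite mul1n {1}e addnC leq_add2l.
move/(leq_div2r M); rewrite addnC divnMDl // addnC addn1 //.
Qed.

Lemma fwd : (exists beta : R, 0 < beta /\
      forall A, Splus_all S Lam A -> opnorm2 A <= beta) /\
   (exists (gamma : R) (N : nat), 0 < gamma < 1 /\ (1 <= N)%N /\
      forall l, (N <= l)%N -> forall A, Splus S Lam l A -> specrad A <= gamma).
Proof.
have [M [M1 hcov]] := fwd_cover.
have [B [B1 hB]] := fwd_bound1.
have hpow := fwd_pow hB B1.
have hdec := fwd_decay M1 B1 hcov hpow.
set C := 2 * ((d * d)%:R * B ^+ M).
have B0 : 0 < B by apply: lt_le_trans B1; exact: ltr01.
have C0 : 0 < C by rewrite /C mulr_gt0 // mulr_gt0 ?exprn_gt0 // dd_gt0.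
have h20 : (0 : R) <= 2^-1 by rewrite invr_ge0.
have h21 : (2^-1 : R) <= 1 by rewrite invf_le1 // ler1n.
have hD : (d * d)%:R <= C.
  apply: (@le_trans _ _ ((d * d)%:R * B ^+ M)).
    by rewrite -[X in X <= _]mulr1 ler_wpM2l ?(ltW dd_gt0) // exprn_ege1.
  by rewrite /C ler_peMl ?ler1n // mulr_ge0 ?exprn_ge0 ?(ltW dd_gt0) ?(ltW B0).
have hgC : forall l x, Lam x -> n1 (prodS S x l) <= C.
  move=> l x Lx; apply: le_trans (hdec l x Lx) _.
  rewrite -[X in _ <= X]mulr1 ler_wpM2l ?(ltW C0) //.
  exact: exprn_ile1.
split.
  exists C; split => // A [l _]; case: l => [|l].
    by rewrite /= => ->; apply: le_trans (opnorm2_le_n1 _) _; apply: le_trans n1_one _.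
  by move=> [x Lx <-]; apply: le_trans (opnorm2_le_n1 _) _; exact: (hgC l.+1 x Lx).
pose K0 := (Num.truncn (2 * C)).+1.
exists (2^-1), (M * K0)%N; split.
  by rewrite invr_gt0 ltr0n /= invf_lt1 // ltr1n.
split; first by rewrite muln_gt0 M1.
move=> l hl A; case: l hl => [|l] hl.
  by move: hl; rewrite leqn0 muln_eq0 (negbTE (lt0n_neq0 M1)).
move=> [x Lx <-]; apply: specrad_le => // z hz.
apply: le_trans (eig_le_n1 hz) _; apply: le_trans (hdec _ x Lx) _.
apply: (@le_trans _ _ (C * (2^-1) ^+ K0)).
  apply: ler_wpM2l; first exact: ltW.
  apply: ler_wiXn2l => //.
  by rewrite -(mulKn K0 (M1 : (0 < M)%N)) leq_div2r.
have hK : 2 * C <= 2 ^+ K0.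
  apply: (le_trans (ltW (truncnS_gt _))); rewrite -natrX ler_nat.
  exact: ltnW (ltn_expl _ (isT : (1 < 2)%N)).
rewrite exprVn ler_pdivrMr ?exprn_gt0 //.
lra.
Qed.

End Fwd.

Unset Implicit Arguments.
Set Strict Implicit.

Theorem lemma3p1 (R : realType) (I : metricType R) (d : nat)
    (S : I -> 'M[R[i]]_d) (Lam : set (nat -> I)) :
  (1 <= d)%N ->
  (forall j k : 'I_d, continuous (fun x : I => complex.Re (S x j k)) /\
                      continuous (fun x : I => complex.Im (S x j k))) ->
  Lam !=set0 ->
  @compact {ptws nat -> I} Lam ->
  (forall i, Lam i -> Lam (theta_plus i)) ->
  (forall i, Lam i ->
     forall j k : 'I_d, (fun n => cabs (prodS S i n j k)) @ \oo --> (0 : R))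
  <->
  ((exists beta : R, 0 < beta /\
      forall A, Splus_all S Lam A -> opnorm2 A <= beta) /\
   (exists (gamma : R) (N : nat), 0 < gamma < 1 /\ (1 <= N)%N /\
      forall l, (N <= l)%N -> forall A, Splus S Lam l A -> specrad A <= gamma)).
Proof.
move=> d1 hS hne hcpt hL; split.
  by move=> hconv; apply: fwd.
move=> [[beta [b0 hb]] [gamma [N [/andP[g0 g1] [N1 hg]]]]] i Li j k.
exact: (conv_dir d1 hL b0 hb g1 N1 hg Li).
Qed.
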